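(* Let $(M,s)$ be a finite pointed epistemic model, $M=(S,R,V)$, and let $\phi$ be a satisfiable formula of $\mathcal{L}$. Suppose that all agents occurring in $\phi$ have non-trivial beliefs in state $s$ of $M$, in the sense that there is a set $S^{ser}\subseteq S$ with $s\in S^{ser}$ such that for each agent $a$ occurring in $\phi$ and each $t\in S^{ser}$ there is $u\in S^{ser}$ with $(t,u)\in R(a)$. Then there is an update $(\mathsf{U},\mathsf{e})$ such that $(M,s)\models\langle\mathsf{U},\mathsf{e}\rangle\phi$.
   Context: Fix a finite set of agents $A$ and countable set of atoms $P$. An epistemic model is $M=(S,R,V)$ with $S$ nonempty, $R:A\to\wp(S\times S)$, $V:P\to\wp(S)$. The language $\mathcal{L}$: $\phi ::= p \mid \neg\phi\mid\phi\wedge\phi\mid[\alpha]\phi$, $\alpha ::= a\mid B^*\mid(\mathsf{U},\mathsf{e})$ ($a\in A$, $B\subseteq A$), with $\langle\alpha\rangle\phi:=\neg[\alpha]\neg\phi$. An update model $\mathsf{U}=(\mathsf{E},\mathsf{R},\mathsf{pre},\mathsf{post})$ has finite nonempty event set $\mathsf{E}$, $\mathsf{R}:A\to\wp(\mathsf{E}\times\mathsf{E})$, $\mathsf{pre}:\mathsf{E}\to\mathcal{L}$ and $\mathsf{post}:\mathsf{E}\to(P\to\mathcal{L})$ with each $\mathsf{post}(\mathsf{e})$ differing from the identity on finitely many atoms; an update is $(\mathsf{U},\mathsf{e})$ with $\mathsf{e}\in\mathsf{E}$. Semantics: atoms via $V$, Booleans as usual, $[a]\phi$ true at $s$ iff $\phi$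 true at all $R(a)$-successors, $[B^*]\phi$ true iff $\phi$ true at all states reachable by the reflexive transitive closure of $\bigcup_{a\in B}R(a)$, and $(M,s)\models[\mathsf{U},\mathsf{e}]\phi$ iff $(M,s)\models\mathsf{pre}(\mathsf{e})$ implies $(M\otimes\mathsf{U},(s,\mathsf{e}))\models\phi$, where $M\otimes\mathsf{U}$ has domain $\{(t,\mathsf{f}) : (M,t)\models\mathsf{pre}(\mathsf{f})\}$, $((t,\mathsf{f}),(u,\mathsf{g}))$ related for $a$ iff $(t,u)\in R(a)$ and $(\mathsf{f},\mathsf{g})\in\mathsf{R}(a)$, and $(t,\mathsf{f})\in V^\otimes(p)$ iff $(M,t)\models\mathsf{post}(\mathsf{f})(p)$. A formula is satisfiable if it is true in some pointed epistemic model. *)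

(* Defs.v *)
From mathcomp Require Import all_boot.
From Stdlib Require Import Relations.Relation_Operators.

Set Implicit Arguments.
Unset Strict Implicit.
Unset Printing Implicit Defensive.

Section Lang.
Variables (A : finType) (P : countType).

(* An update model with
   event set 'I_n.+1 (finite, nonempty) is given inline by
   its relations R, preconditions pre and postconditions post; post f is a
   finite list of substitutions (p, psi) meaning post(f)(p) = psi for the
   first pair with first component p, and post(f)(p) = p otherwise. *)
Inductive form : Type :=
| Atom of P
| Neg of form
| And of form & form
| Box of prog & form
with prog : Type :=
| Ag of A
| Star of {set A}
| Upd (n : nat) (R : A -> 'I_n.+1 -> 'I_n.+1 -> bool)
      (pre : 'I_n.+1 -> form) (post : 'I_n.+1 -> seq (P * form))
      (e : 'I_n.+1).

Definition Dia (a : prog) (f : form) : form := Neg (Box a (Neg f)).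

Record model (S : Type) := Model {
  acc : A -> S -> S -> Prop;
  valu : P -> S -> Prop }.

Definition product_model (S : Type) (M : model S) (n : nat)
  (Rn : A -> 'I_n.+1 -> 'I_n.+1 -> bool)
  (D : S -> 'I_n.+1 -> Prop)
  (V' : P -> S -> 'I_n.+1 -> Prop)
  : model {x : S * 'I_n.+1 | D x.1 x.2} :=
  @Model _ (fun a x y => acc M a (sval x).1 (sval y).1 /\ Rn a (sval x).2 (sval y).2)
           (fun p x => V' p (sval x).1 (sval x).2).

Fixpoint sat (S : Type) (M : model S) (s : S) (f : form) {struct f} : Prop :=
  match f with
  | Atom p => valu M p s
  | Neg g => ~ sat M s g
  | And g h => sat M s g /\ sat M s h
  | Box (Ag a) g => forall t, acc M a s t -> sat M t g
  | Box (Star B) g =>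
      forall t, clos_refl_trans S (fun x y => exists a, a \in B /\ acc M a x y) s t ->
        sat M t g
  | Box (Upd n Rn pre post e) g =>
      forall H : sat M s (pre e),
        sat (product_model M Rn (fun t f => sat M t (pre f))
               (fun p t f =>
                  (fix look (l : seq (P * form)) : Prop :=
                     match l with
                     | nil => valu M p t
                     | (q, psi) :: l' => if q == p then sat M t psi else look l'
                     end) (post f)))
            (exist _ (s, e) H) g
  end.

Fixpoint occurs (a : A) (f : form) {struct f} : Prop :=
  match f with
  | Atom _ => False
  | Neg g => occurs a g
  | And g h => occurs a g \/ occurs a h
  | Box (Ag b) g => b = a \/ occurs a g
  | Box (Star B) g => a \in B \/ occurs a g
  | Box (Upd n _ pre post _) g =>
      (exists f0, occurs a (pre f0)) \/
      (exists f0, (fix occl (l : seq (P * form)) : Prop :=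
                     match l with
                     | nil => False
                     | (_, psi) :: l' => occurs a psi \/ occl l'
                     end) (post f0)) \/
      occurs a g
  end.

Definition satisfiable (f : form) : Prop :=
  exists (S : Type) (M : model S) (s : S), sat M s f.

End Lang.

Arguments acc {A P S} _ _ _ _.
Arguments valu {A P S} _ _ _.
Arguments sat {A P S} M s f.
Arguments occurs {A P} a f.
Arguments Upd {A P n} R pre post e.

(* Main.v *)
Require Import Defs.
From mathcomp Require Import all_boot.
From Stdlib Require Import Relations.Relation_Operators Relations.Operators_Properties.
From Stdlib Require List.
From Stdlib Require Import ProofIrrelevance ClassicalEpsilon Classical.

Set Implicit Arguments.
Unset Strict Implicit.
Unset Printing Implicit Defensive.

Module Aux.
Import List.
Section Main.
Variables (A : finType) (P : countType).
Notation form := (form A P).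

Section Ind.
Variable Q : form -> Prop.
Hypothesis HA : forall p, Q (Atom A p).
Hypothesis HN : forall g, Q g -> Q (Neg g).
Hypothesis HC : forall g h, Q g -> Q h -> Q (And g h).
Hypothesis HB : forall a g, Q g -> Q (Box (Ag P a) g).
Hypothesis HS : forall B g, Q g -> Q (Box (Star P B) g).
Hypothesis HU : forall n (R : A -> 'I_n.+1 -> 'I_n.+1 -> bool) pre post e g,
  (forall f, Q (pre f)) -> (forall f q chi, List.In (q, chi) (post f) -> Q chi) ->
  Q g -> Q (Box (Upd R pre post e) g).

Fixpoint fi (phi : form) : Q phi :=
  match phi with
  | Atom p => HA p
  | Neg g => HN (fi g)
  | And g h => HC (fi g) (fi h)
  | Box pr g =>
    match pr with
    | Ag a => HB a (fi g)
    | Star B => HS B (fi g)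
    | Upd n R pre post e => HU R e (fun f => fi (pre f))
        (fun f => (fix go (l : list (P * form)) : forall q chi, List.In (q, chi) l -> Q chi :=
           match l return forall q chi, List.In (q, chi) l -> Q chi with
           | nil => fun q chi H => False_ind _ H
           | qc :: l' => fun q chi H =>
               match H return Q chi with
               | or_introl E => @eq_ind _ qc (fun y => Q (snd y)) (fi (snd qc)) _ E
               | or_intror H' => go l' q chi H'
               end
           end) (post f)) (fi g)
    end
  end.
End Ind.

Fixpoint cl (phi : form) : list form :=
  match phi with
  | Atom p => [:: phi]
  | Neg g => phi :: cl g
  | And g h => phi :: cl g ++ cl h
  | Box (Ag a) g => phi :: cl g
  | Box (Star B) g => phi :: cl g
  | Box (Upd n R pre post e) g =>
      phi :: cl g ++ List.flat_map (fun f => cl (pre f) ++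
         List.flat_map (fun qc => cl qc.2) (post f) ++
         List.map (Box (Upd R pre post f)) (cl g)) (enum 'I_n.+1)
  end.


Definition look S (M : model A P S) (p : P) (t : S) : list (P * form) -> Prop :=
  fix look l := match l with
                | nil => valu M p t
                | (q, psi) :: l' => if q == p then sat M t psi else look l'
                end.

Lemma look_iff S1 S2 (M1 : model A P S1) (M2 : model A P S2) p t1 t2 l :
  (forall q chi, List.In (q, chi) l -> (sat M1 t1 chi <-> sat M2 t2 chi)) ->
  (valu M1 p t1 <-> valu M2 p t2) -> (look M1 p t1 l <-> look M2 p t2 l).
Proof.
move=> H Hv; elim: l H => [|[q chi] l IH] H //=.
case: (q == p); first by apply: H; apply: in_eq.
apply: IH => q' c' Hi; apply: (H q'); by apply: List.in_cons.
Qed.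

Lemma In_mem (T : eqType) (x : T) (s : list T) : x \in s -> List.In x s.
Proof. elim: s => [|y s IH] //=; rewrite inE => /orP [/eqP->|/IH]; tauto. Qed.

Lemma In_enum n (f : 'I_n.+1) : List.In f (enum 'I_n.+1).
Proof. by apply: In_mem; rewrite mem_enum. Qed.

Lemma cl_self phi : List.In phi (cl phi).
Proof. by case: phi => [p|g|g h|[a|B|n R pre post e] g] /=; left. Qed.

Section ClUpd.
Variables (n : nat) (R : A -> 'I_n.+1 -> 'I_n.+1 -> bool) (pre : 'I_n.+1 -> form)
  (post : 'I_n.+1 -> list (P * form)) (e : 'I_n.+1) (g : form).
Let W := Box (Upd R pre post e) g.
Lemma clU_g chi : List.In chi (cl g) -> List.In chi (cl W).
Proof. move=> H; right; apply: in_or_app; by left. Qed.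
Lemma clU_F f chi : List.In chi (cl (pre f) ++
         List.flat_map (fun qc => cl qc.2) (post f) ++
         List.map (Box (Upd R pre post f)) (cl g)) -> List.In chi (cl W).
Proof. move=> H; right; apply: in_or_app; right; apply/in_flat_map; exists f; split=> //; exact: In_enum. Qed.
Lemma clU_pre f chi : List.In chi (cl (pre f)) -> List.In chi (cl W).
Proof. move=> H; apply: (@clU_F f); apply: in_or_app; by left. Qed.
Lemma clU_post f q c chi : List.In (q, c) (post f) -> List.In chi (cl c) -> List.In chi (cl W).
Proof. move=> H1 H2; apply: (@clU_F f); apply: in_or_app; right; apply: in_or_app; left.
apply/in_flat_map; by exists (q, c). Qed.
Lemma clU_box f chi : List.In chi (cl g) -> List.In (Box (Upd R pre post f) chi) (cl W).
Proof. move=> H; apply: (@clU_F f); apply: in_or_app; right; apply: in_or_app; right.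
exact: in_map. Qed.
End ClUpd.

Definition bisim S1 S2 (G : A -> Prop) (Pa : P -> Prop) (M1 : model A P S1) (M2 : model A P S2)
  (Z : S1 -> S2 -> Prop) :=
 [/\ (forall p x y, Pa p -> Z x y -> (valu M1 p x <-> valu M2 p y)),
  (forall a x y x', G a -> Z x y -> acc M1 a x x' -> exists2 y', acc M2 a y y' & Z x' y') &
  (forall a x y y', G a -> Z x y -> acc M2 a y y' -> exists2 x', acc M1 a x x' & Z x' y')].

Lemma rt_sim T1 T2 (R1 : T1 -> T1 -> Prop) (R2 : T2 -> T2 -> Prop) (Z : T1 -> T2 -> Prop) :
  (forall x y x', Z x y -> R1 x x' -> exists2 y', R2 y y' & Z x' y') ->
  forall x x', clos_refl_trans _ R1 x x' -> forall y, Z x y ->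
  exists2 y', clos_refl_trans _ R2 y y' & Z x' y'.
Proof.
move=> H x x'; elim=> {x x'} [x x' Hx y Z1|x y Z1|x x1 x2 _ IH1 _ IH2 y Z1].
- have [y' H1 H2] := H _ _ _ Z1 Hx; exists y' => //; exact: rt_step.
- exists y => //; exact: rt_refl.
- have [y1 H1 H2] := IH1 _ Z1; have [y2 H3 H4] := IH2 _ H2; exists y2 => //.
  exact: rt_trans H1 H3.
Qed.

Lemma sym_bisim S1 S2 G Pa (M1 : model A P S1) (M2 : model A P S2) Z :
  bisim G Pa M1 M2 Z -> bisim G Pa M2 M1 (fun y x => Z x y).
Proof.
case=> H1 H2 H3; split.
- move=> p x y Hp Z1; symmetry; exact: H1.
- move=> a x y x' Ga Z1 Hx; have [y' ? ?] := H3 _ _ _ _ Ga Z1 Hx; by exists y'.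
- move=> a x y y' Ga Z1 Hx; have [x' ? ?] := H2 _ _ _ _ Ga Z1 Hx; by exists x'.
Qed.


Definition occl (a : A) : list (P * form) -> Prop :=
  fix occl l := match l with
                | nil => False
                | (_, psi) :: l' => occurs a psi \/ occl l'
                end.

Lemma occl_In a l q c : List.In (q, c) l -> occurs a c -> occl a l.
Proof.
elim: l => [|[q' c'] l IH] //= [E|H] Ho.
- case: E => _ ->; by left.
- right; exact: IH.
Qed.

Definition Zp S1 S2 n (D1 : S1 -> 'I_n.+1 -> Prop) (D2 : S2 -> 'I_n.+1 -> Prop) (Z : S1 -> S2 -> Prop)
  (u : {x : S1 * 'I_n.+1 | D1 x.1 x.2}) (v : {x : S2 * 'I_n.+1 | D2 x.1 x.2}) :=
  Z (sval u).1 (sval v).1 /\ (sval u).2 = (sval v).2.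

Lemma bisim_prod S1 S2 G Pa (M1 : model A P S1) (M2 : model A P S2) Z n
  (R : A -> 'I_n.+1 -> 'I_n.+1 -> bool) (pre : 'I_n.+1 -> form) (post : 'I_n.+1 -> list (P * form)) :
  bisim G Pa M1 M2 Z ->
  (forall f x y, Z x y -> (sat M1 x (pre f) <-> sat M2 y (pre f))) ->
  (forall f q c x y, List.In (q, c) (post f) -> Z x y -> (sat M1 x c <-> sat M2 y c)) ->
  bisim G Pa (product_model M1 R (fun t f => sat M1 t (pre f)) (fun p t f => look M1 p t (post f)))
             (product_model M2 R (fun t f => sat M2 t (pre f)) (fun p t f => look M2 p t (post f)))
             (Zp Z).
Proof.
case=> H1 H2 H3 Hpre Hpost; split.
- move=> p [[x f] Hx] [[y f'] Hy] Hp [/= Zxy Ef]; subst f'; rewrite /=.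
  apply: look_iff; last exact: H1.
  move=> q c Hi; exact: Hpost Hi Zxy.
- move=> a [[x f] Hx] [[y f'] Hy] [[x' g] Hx'] Ga [/= Zxy Ef] [/= Hacc HR]; subst f'.
  have [y' Hy1 Zy'] := H2 _ _ _ _ Ga Zxy Hacc.
  have Hy' : sat M2 y' (pre g) by apply/(Hpre g x' y' Zy').
  exists (exist (fun x => sat M2 x.1 (pre x.2)) (y', g) Hy') => //.
- move=> a [[x f] Hx] [[y f'] Hy] [[y' g] Hy'] Ga [/= Zxy Ef] [/= Hacc HR]; subst f'.
  have [x' Hx1 Zx'] := H3 _ _ _ _ Ga Zxy Hacc.
  have Hx' : sat M1 x' (pre g) by apply/(Hpre g x' y' Zx').
  exists (exist (fun x => sat M1 x.1 (pre x.2)) (x', g) Hx') => //.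
Qed.

Lemma inv phi : forall S1 S2 G Pa (M1 : model A P S1) (M2 : model A P S2) Z,
  (forall a, occurs a phi -> G a) -> (forall p, List.In (Atom A p) (cl phi) -> Pa p) ->
  bisim G Pa M1 M2 Z -> forall x y, Z x y -> (sat M1 x phi <-> sat M2 y phi).
Proof.
elim/fi: phi.
- move=> p S1 S2 G Pa M1 M2 Z _ HP [H1 _ _] x y Zxy /=; apply: H1 => //; apply: HP; exact: in_eq.
- move=> g IH S1 S2 G Pa M1 M2 Z HG HP Hb x y Zxy /=.
  have := IH S1 S2 G Pa M1 M2 Z HG (fun p H => HP p (or_intror H)) Hb x y Zxy; tauto.
- move=> g h IHg IHh S1 S2 G Pa M1 M2 Z HG HP Hb x y Zxy /=.
  have := IHg S1 S2 G Pa M1 M2 Z (fun a H => HG a (or_introl H))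
    (fun p H => HP p (or_intror (in_or_app _ _ _ (or_introl H)))) Hb x y Zxy.
  have := IHh S1 S2 G Pa M1 M2 Z (fun a H => HG a (or_intror H))
    (fun p H => HP p (or_intror (in_or_app _ _ _ (or_intror H)))) Hb x y Zxy.
  tauto.
- move=> a g IH S1 S2 G Pa M1 M2 Z HG HP Hb x y Zxy /=.
  have IH' := IH S1 S2 G Pa M1 M2 Z (fun a H => HG a (or_intror H)) (fun p H => HP p (or_intror H)) Hb.
  have Ga : G a by apply: HG; left.
  case: Hb => _ H2 H3; split.
  + move=> Hall y' Hy'; have [x' Hx' Z'] := H3 _ _ _ _ Ga Zxy Hy'.
    apply/(IH' _ _ Z'); exact: Hall.
  + move=> Hall x' Hx'; have [y' Hy' Z'] := H2 _ _ _ _ Ga Zxy Hx'.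
    apply/(IH' _ _ Z'); exact: Hall.
- move=> B g IH S1 S2 G Pa M1 M2 Z HG HP Hb x y Zxy /=.
  have IH' := IH S1 S2 G Pa M1 M2 Z (fun a H => HG a (or_intror H)) (fun p H => HP p (or_intror H)) Hb.
  case: Hb => _ H2 H3; split.
  + move=> Hall y' Hy'.
    have [x' Hx' Z'] := @rt_sim _ _ _ (fun x y => exists a, a \in B /\ acc M1 a x y) (fun y x => Z x y)
      (fun y x y' Zxy '(ex_intro a (conj Ha Hacc)) =>
         let: ex_intro2 x' H1 H2 := H3 a x y y' (HG a (or_introl Ha)) Zxy Hacc in
         ex_intro2 _ _ x' (ex_intro _ a (conj Ha H1)) H2) _ _ Hy' _ Zxy.
    apply/(IH' _ _ Z'); exact: Hall.
  + move=> Hall x' Hx'.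
    have [y' Hy' Z'] := @rt_sim _ _ _ (fun x y => exists a, a \in B /\ acc M2 a x y) Z
      (fun x y x' Zxy '(ex_intro a (conj Ha Hacc)) =>
         let: ex_intro2 y' H1 H2 := H2 a x y x' (HG a (or_introl Ha)) Zxy Hacc in
         ex_intro2 _ _ y' (ex_intro _ a (conj Ha H1)) H2) _ _ Hx' _ Zxy.
    apply/(IH' _ _ Z'); exact: Hall.
- move=> n R pre post e g IHpre IHpost IHg S1 S2 G Pa M1 M2 Z HG HP Hb x y Zxy /=.
  have Hpre : forall f x y, Z x y -> (sat M1 x (pre f) <-> sat M2 y (pre f)).
    move=> f; apply: (IHpre f S1 S2 G Pa M1 M2 Z) => //.
    + move=> a Ha; apply: HG; left; by exists f.
    + move=> p Hp; apply: HP; exact: clU_pre Hp.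
  have Hpost : forall f q c x y, List.In (q, c) (post f) -> Z x y -> (sat M1 x c <-> sat M2 y c).
    move=> f q c x' y' Hi; apply: (IHpost f q c Hi S1 S2 G Pa M1 M2 Z) => //.
    + move=> a Ha; apply: HG; right; left; exists f; exact: occl_In Hi Ha.
    + move=> p Hp; apply: HP; exact: clU_post Hi Hp.
  have Hbp := bisim_prod R Hb Hpre Hpost.
  have IHg' := IHg _ _ G Pa _ _ _ (fun a H => HG a (or_intror (or_intror H)))
     (fun p H => HP p (clU_g R pre post e H)) Hbp.
  split.
  + move=> Hall H2; have H1 := (Hpre e x y Zxy).2 H2.
    apply/(IHg' (exist _ (x, e) H1)); last exact: Hall.
    by split.
  + move=> Hall H1; have H2 := (Hpre e x y Zxy).1 H1.
    apply/(IHg' _ (exist _ (y, e) H2)); last exact: Hall.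
    by split.
Qed.


Definition Qm S (K : model A P S) (eqv : S -> S -> Prop) : model A P S :=
  Model (fun a x y => exists x' y', [/\ eqv x x', eqv y y' & acc K a x' y'])
        (fun p x => exists2 x', eqv x x' & valu K p x').

Lemma box_upd_iff S (K : model A P S) n (R : A -> 'I_n.+1 -> 'I_n.+1 -> bool) pre post f chi x H :
  sat K x (Box (Upd R pre post f) chi) <->
  sat (product_model K R (fun t f => sat K t (pre f)) (fun p t f => look K p t (post f)))
      (exist _ (x, f) H) chi.
Proof.
split => [Hall|Hs H'] /=; first exact: Hall.
by rewrite (proof_irrelevance _ H' H).
Qed.

Definition Eqv S (eqv : S -> S -> Prop) :=
  [/\ forall x, eqv x x, forall x y, eqv x y -> eqv y x & forall x y z, eqv x y -> eqv y z -> eqv x z].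

Lemma filt phi : forall S (K : model A P S) (eqv : S -> S -> Prop), Eqv eqv ->
  (forall chi, List.In chi (cl phi) -> forall x y, eqv x y -> (sat K x chi <-> sat K y chi)) ->
  forall x, sat K x phi <-> sat (Qm K eqv) x phi.
Proof.
elim/fi: phi.
- move=> p S K eqv [Hr Hs Ht] Hcl x /=; split => [H|[x' Hx' H]]; first by exists x.
  by apply/(Hcl _ (in_eq _ _) _ _ Hx').
- move=> g IH S K eqv He Hcl x /=.
  have := IH S K eqv He (fun c H => Hcl c (or_intror H)) x; tauto.
- move=> g h IHg IHh S K eqv He Hcl x /=.
  have := IHg S K eqv He (fun c H => Hcl c (or_intror (in_or_app _ _ _ (or_introl H)))) x.
  have := IHh S K eqv He (fun c H => Hcl c (or_intror (in_or_app _ _ _ (or_intror H)))) x.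
  tauto.
- move=> a g IH S K eqv [Hr Hs Ht] Hcl x /=.
  have IH' := IH S K eqv (And3 Hr Hs Ht) (fun c H => Hcl c (or_intror H)).
  have Hg := Hcl g (or_intror (cl_self g)).
  have Hb := Hcl _ (in_eq _ _).
  split.
  + move=> Hall y [x1 [y1 [Hx1 Hy1 Hacc]]].
    apply/IH'; apply/(Hg _ _ Hy1).
    have := (Hb _ _ Hx1).1 Hall; exact.
  + move=> Hall y Hacc; apply/IH'; apply: Hall; exists x, y; split => //.
- move=> B g IH S K eqv [Hr Hs Ht] Hcl x /=.
  have IH' := IH S K eqv (And3 Hr Hs Ht) (fun c H => Hcl c (or_intror H)).
  have Hb := Hcl _ (in_eq _ _).
  split.
  + move=> Hall t Hpath; apply/IH'.
    suff : sat K t (Box (Star P B) g) by move=> /= H; apply: H; exact: rt_refl.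
    elim: Hpath Hall => {x t} [x y [b [Hb' [x1 [y1 [Hx1 Hy1 Hacc]]]]] Hall|x Hall|x y z _ IH1 _ IH2 Hall].
    * apply/(Hb _ _ Hy1); have := (Hb _ _ Hx1).1 Hall => /= H t Ht'.
      apply: H; apply: rt_trans Ht'; apply: rt_step; exists b; split => //.
    * done.
    * exact: IH2 (IH1 Hall).
  + move=> Hall t Hpath; apply/IH'; apply: Hall.
    elim: Hpath => {x t} [x y [b [Hb' Hacc]]|x|x y z _ H1 _ H2].
    * apply: rt_step; exists b; split => //; exists x, y; split => //.
    * exact: rt_refl.
    * exact: rt_trans H1 H2.
- move=> n R pre post e g IHpre IHpost IHg S K eqv [Hr Hs Ht] Hcl x.
  have He : Eqv eqv by split.
  set W := Box (Upd R pre post e) g.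
  have Hpre : forall f x, sat K x (pre f) <-> sat (Qm K eqv) x (pre f).
    move=> f; apply: IHpre => // c Hc; apply: Hcl; exact: clU_pre Hc.
  have Hpost : forall f q c x, List.In (q, c) (post f) -> (sat K x c <-> sat (Qm K eqv) x c).
    move=> f q c x' Hi; apply: (IHpost f q c Hi) => // c' Hc; apply: Hcl; exact: clU_post Hi Hc.
  have Hval : forall p x, List.In (Atom A p) (cl W) -> (valu K p x <-> valu (Qm K eqv) p x).
    move=> p x' Hp /=; split => [H|[x1 Hx1 H]]; first by exists x'.
    by apply/(Hcl _ Hp _ _ Hx1).
  set KU := product_model K R (fun t f => sat K t (pre f)) (fun p t f => look K p t (post f)).
  set QK := Qm K eqv.
  set QU := product_model QK R (fun t f => sat QK t (pre f)) (fun p t f => look QK p t (post f)).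
  pose eqv' := fun (u v : {x : S * 'I_n.+1 | sat K x.1 (pre x.2)}) =>
     eqv (sval u).1 (sval v).1 /\ (sval u).2 = (sval v).2.
  have He' : Eqv eqv'.
    split.
    + by move=> u; split.
    + by move=> u v [H1 H2]; split; [exact: Hs|exact: esym].
    + by move=> u v w [H1 H2] [H3 H4]; split; [exact: Ht H1 H3|rewrite H2].
  have Hcl' : forall chi, List.In chi (cl g) -> forall u v, eqv' u v -> (sat KU u chi <-> sat KU v chi).
    move=> chi Hchi [[y f] Hy] [[y' f'] Hy'] [/= Hyy' Ef]; subst f'.
    rewrite -!box_upd_iff; apply: Hcl => //; exact: clU_box.
  have IHg' := IHg _ KU eqv' He' Hcl'.
  have Hlook : forall p f x x', eqv x x' -> List.In (Atom A p) (cl g) ->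
      (look K p x' (post f) <-> look QK p x (post f)).
    move=> p f y y' Hyy' Hp.
    have Hp' : List.In (Atom A p) (cl W) by exact: clU_g Hp.
    transitivity (look K p y (post f)).
    + apply: look_iff.
      * move=> q c Hi; symmetry; apply: Hcl Hyy'; exact: clU_post Hi (cl_self c).
      * symmetry; exact: (Hcl _ Hp' _ _ Hyy').
    + apply: look_iff; last exact: Hval.
      move=> q c Hi; exact: Hpost Hi.
  have Hb : bisim (fun _ => True) (fun p => List.In (Atom A p) (cl g)) (Qm KU eqv') QU
             (fun u v => sval u = sval v).
    split.
    + move=> p [[y f] Hy] [[y' f'] Hy'] Hp /= [<- <-]; split.
      * move=> [[[y1 f1] Hy1] [/= Hyy1 <-] H]; rewrite -(Hlook p f y y1) //.
      * move=> H; exists (exist _ (y, f) Hy); first by split.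
        by rewrite /= (Hlook p f y y).
    + move=> a [[y f] Hy] [[y' f'] Hy'] [[z g'] Hz] _ /= [<- <-] [[[y1 f1] Hy1] [[[z1 g1] Hz1] [[/= Hyy1 <-] [/= Hzz1 <-] [/= Hacc HR]]]].
      have Hz' : sat QK z (pre g') by apply/Hpre.
      exists (exist _ (z, g') Hz') => //=; split => //.
      by exists y1, z1; split.
    + move=> a [[y f] Hy] [[y' f'] Hy'] [[z g'] Hz] _ /= [<- <-] [[y1 [z1 [Hyy1 Hzz1 Hacc]]] HR].
      have HzK : sat K z (pre g') by apply/Hpre.
      have Hy1 : sat K y1 (pre f) by apply/(Hcl _ (clU_pre _ _ _ _ (cl_self _)) _ _ Hyy1).
      have Hz1 : sat K z1 (pre g') by apply/(Hcl _ (clU_pre _ _ _ _ (cl_self _)) _ _ Hzz1).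
      exists (exist _ (z, g') HzK) => //=.
      exists (exist _ (y1, f) Hy1), (exist _ (z1, g') Hz1); split => //.
  have Hinv := inv (fun a _ => I) (fun p H => H) Hb.
  rewrite /=; split.
  + move=> Hall H2; have H1 := (Hpre e x).2 H2.
    apply/(Hinv (exist _ (x, e) H1)) => //.
    apply/IHg'; exact: Hall.
  + move=> Hall H1; have H2 := (Hpre e x).1 H1.
    apply/IHg'; apply/(Hinv _ (exist _ (x, e) H2)) => //.
Qed.


Definition bb (Pr : Prop) : bool := if excluded_middle_informative Pr then true else false.
Lemma bbP (Pr : Prop) : bb Pr <-> Pr.
Proof. rewrite /bb; case: excluded_middle_informative => //. Qed.

Section Wform.
Variables (S : finType) (M : model A P S) (phi : form).
Definition Ttrue : form := Neg (And phi (Neg phi)).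
Definition Gs : list A := [seq a <- enum A | bb (occurs a phi)].
Fixpoint Xf m : form := match m with
  | 0 => Ttrue
  | m'.+1 => foldr (fun a acc => And (Dia (Ag P a) (Xf m')) acc) Ttrue Gs end.

Lemma foldr_sem (F : form) (l : list A) t :
  sat M t (foldr (fun a acc => And (Dia (Ag P a) F) acc) Ttrue l) <->
  forall a, a \in l -> exists2 u, acc M a t u & sat M u F.
Proof.
elim: l => [|a l IH] /=.
- split => // _ [H1 H2]; exact: H2.
- rewrite IH; split.
  + move=> [H1 H2] a'; rewrite inE => /orP [/eqP ->|Ha]; last exact: H2.
    apply: NNPP => Hn; apply: H1 => u Hu Hf; apply: Hn; by exists u.
  + move=> H; split; last by move=> a' Ha'; apply: H; rewrite inE Ha' orbT.
    have [u Hu Hf] := H a (mem_head _ _); move=> Hall; exact: Hall u Hu Hf.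
Qed.

Lemma Xf_sem m t : sat M t (Xf m.+1) <->
  forall a, occurs a phi -> exists2 u, acc M a t u & sat M u (Xf m).
Proof.
rewrite /= foldr_sem; split => H a Ha; apply: H.
- by rewrite mem_filter mem_enum andbT; apply/bbP.
- by move: Ha; rewrite mem_filter mem_enum andbT => /bbP.
Qed.

Definition Xs m : {set S} := [set t | bb (sat M t (Xf m))].

Lemma Xs_sub m : Xs m.+1 \subset Xs m.
Proof.
elim: m => [|m IH]; apply/subsetP => t; rewrite !inE => /bbP H; apply/bbP.
- by move=> /= [H1 H2]; exact: H2.
- move/Xf_sem: H => H; apply/Xf_sem => a Ha.
  have [u Hu Hf] := H a Ha; exists u => //.
  have : u \in Xs m.+1 by rewrite inE; apply/bbP.
  by move/(subsetP IH); rewrite inE => /bbP.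
Qed.

Lemma Xs_stab : exists m, Xs m.+1 = Xs m.
Proof.
apply: NNPP => Hn.
have Hne : forall j, Xs j.+1 != Xs j by move=> j; apply/eqP => E; apply: Hn; exists j.
suff : forall m, #|Xs m| + m <= #|S|.
  by move/(_ #|S|.+1); rewrite addnS ltnNge leq_addl.
elim => [|m IH]; first by rewrite addn0 max_card.
rewrite addnS; apply: leq_trans IH; rewrite ltn_add2r ltnNge; apply/negP => Hle.
by move: (Hne m); rewrite eqEcard Xs_sub Hle.
Qed.

Lemma W_exists (Sser : {set S}) :
  (forall a, occurs a phi -> forall t, t \in Sser -> exists2 u, u \in Sser & acc M a t u) ->
  exists Wf : form, (forall t, t \in Sser -> sat M t Wf) /\
    (forall t, sat M t Wf -> forall a, occurs a phi -> exists2 u, acc M a t u & sat M u Wf).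
Proof.
move=> Hser; have [m Hm] := Xs_stab; exists (Xf m); split.
- elim: m {Hm} => [|m IH] t Ht; first by move=> /= [H1 H2]; exact: H2.
  apply/Xf_sem => a Ha; have [u Hu Hacc] := Hser a Ha t Ht; exists u => //; exact: IH.
- move=> t Ht; have : t \in Xs m.+1 by rewrite Hm inE; apply/bbP.
  by rewrite inE => /bbP /Xf_sem.
Qed.
End Wform.


Lemma coding (T : Type) (E : finType) (tau : T -> E) (t0 : T) :
  exists m (c : T -> 'I_m.+1), forall x y, c x = c y <-> tau x = tau y.
Proof.
have H0 : 0 < #|E| := leq_ltn_trans (leq0n _) (ltn_ord (enum_rank (tau t0))).
have Heq : #|E| = #|E|.-1.+1 by rewrite prednK.
exists #|E|.-1, (fun x => cast_ord Heq (enum_rank (tau x))) => x y; split => [H|->] //.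
apply: enum_rank_inj; exact: cast_ord_inj H.
Qed.

Lemma bb_eq (P1 P2 : Prop) : bb P1 = bb P2 <-> (P1 <-> P2).
Proof.
split.
- move=> E; split => H; [apply/bbP; rewrite -E; exact/bbP | apply/bbP; rewrite E; exact/bbP].
- move=> E; case H1: (bb P1); case H2: (bb P2) => //.
  + by move/bbP: H1 => /E /bbP; rewrite H2.
  + by move/bbP: H2 => /E /bbP; rewrite H1.
Qed.

Lemma map_eq_In (T : Type) (f g : T -> bool) (l : list T) :
  map f l = map g l <-> (forall c, List.In c l -> f c = g c).
Proof.
elim: l => [|c l IH] /=; first by split.
split.
- move=> [E1 E2] c' [<-|H] //; exact: (proj1 IH E2).
- move=> H; rewrite (H c (or_introl erefl)); congr (_ :: _); apply: (proj2 IH) => c' Hc; apply: H; by right.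
Qed.

Lemma look_const S (M : model A P S) p t (l : list (P * form)) (F : form) :
  (forall q c, List.In (q, c) l -> q = p -> c = F) -> List.In (p, F) l ->
  (look M p t l <-> sat M t F).
Proof.
elim: l => [|[q c] l IH] //= H Hi.
case: eqP => [E|NE].
- by rewrite (H q c (or_introl erefl) E).
- apply: IH; first by move=> q' c' Hi'; apply: H; right.
  case: Hi => // -[E _]; by case: NE.
Qed.

End Main.
End Aux.
Import Aux.
Unset Implicit Arguments.
Set Strict Implicit.

Theorem corollary2 (A : finType) (P : countType) (S : finType)
  (M : model A P S) (s : S) (phi : form A P) :
  satisfiable phi ->
  (exists Sser : {set S}, s \in Sser /\
     forall a, occurs a phi ->
       forall t, t \in Sser -> exists2 u, u \in Sser & acc M a t u) ->
  exists (n : nat) (Rn : A -> 'I_n.+1 -> 'I_n.+1 -> bool)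
         (pre : 'I_n.+1 -> form A P) (post : 'I_n.+1 -> seq (P * form A P))
         (e : 'I_n.+1),
    sat M s (Dia (Upd Rn pre post e) phi).
Proof.
move=> [SN [N [x0 Hx0]]] [Sser [Hs Hser]].
set Phi := cl phi.
pose eqv := fun x y => forall c, List.In c Phi -> (sat N x c <-> sat N y c).
have He : Eqv eqv.
  split.
  - by move=> x c _.
  - move=> x y H c Hc; have := H c Hc; tauto.
  - move=> x y z H1 H2 c Hc; have := H1 c Hc; have := H2 c Hc; tauto.
have HQ : sat (Qm N eqv) x0 phi := (filt He (fun c Hc x y H => H c Hc) x0).1 Hx0.
pose tau := fun x => map_tuple (fun c => bb (sat N x c)) (in_tuple Phi).
have [m [cd Hcd]] := coding tau x0.
have Hcd' : forall x y, cd x = cd y <-> eqv x y.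
  move=> x y; apply: iff_trans (Hcd x y) _; split => [E|H].
  - have : map (fun c => bb (sat N x c)) Phi = map (fun c => bb (sat N y c)) Phi.
      by have := congr1 val E.
    move/map_eq_In => H c Hc; exact/bb_eq/H.
  - apply: val_inj => /=; apply/map_eq_In => c Hc; exact/bb_eq/H.
have [Wf [HW1 HW2]] := W_exists Hser.
pose vf := fun (i : 'I_m.+1) p => if bb (exists2 x, cd x = i & valu N p x) then Ttrue phi else Neg (Ttrue phi).
pose atl := fun i => List.flat_map (fun c => match c with Atom p => [:: (p, vf i p)] | _ => nil end) Phi.
pose Rn := fun a (i j : 'I_m.+1) => bb (exists x y, [/\ cd x = i, cd y = j & acc N a x y]).
exists m, Rn, (fun _ => Wf), atl, (cd x0).
have Hs' : sat M s Wf := HW1 s Hs.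
rewrite /Dia /= => Hall; apply: (Hall Hs').
have Hb : bisim (fun a => occurs a phi) (fun p => List.In (Atom A p) Phi) (Qm N eqv)
   (product_model M Rn (fun t f => sat M t Wf) (fun p t f => look M p t (atl f)))
   (fun x u => cd x = (sval u).2).
  split.
  - move=> p x [[t i] Ht] Hp /= Exi.
    rewrite (@look_const _ _ _ M p t (atl i) (vf i p)).
    + rewrite /vf; case E: (bb _).
      * move/bbP: E => [x' Ex' Hv]; split => _; first by move=> [H1 H2].
        by exists x' => //; apply/Hcd'; rewrite Exi.
      * split => [[x' Hxx' Hv]|/= H]; last by exfalso; apply: H => -[H1 H2].
        have : bb (exists2 x, cd x = i & valu N p x). { apply/bbP; exists x' => //. rewrite -Exi. symmetry. apply/Hcd'. exact: Hxx'. }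
        by rewrite E.
    + move=> q c /List.in_flat_map [c0 [_ Hin]] Eq.
      case: c0 Hin => // p0 /= [] // -[E1 E2]; subst; by [].
    + apply/List.in_flat_map; exists (Atom A p); split => //=; by left.
  - move=> a x [[t i] Ht] y Ga /= Exi [x1 [y1 [Hxx1 Hyy1 Hacc]]].
    have [u Hu HuW] := HW2 t Ht a Ga.
    exists (exist _ (u, cd y) HuW) => //=; split => //.
    apply/bbP; exists x1, y1; split => //.
    + rewrite -Exi; symmetry; exact/Hcd'.
    + symmetry; exact/Hcd'.
  - move=> a x [[t i] Ht] [[u j] Hu] Ga /= Exi [Hacc /bbP [x1 [y1 [E1 E2 HN]]]].
    exists y1 => //; exists x1, y1; split => //.
    + by apply/Hcd'; rewrite Exi.
apply/(inv (fun a H => H) (fun p H => H) Hb (x := x0) (y := exist _ (s, cd x0) Hs')) => //.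
Qed.
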